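(* Let $A$ be an associative unital algebra over a field $k$ and $\delta$ a $k$-linear derivation of $A$ such that $\delta$ is locally nilpotent if $\mathrm{char}(k)=0$, and $\delta^p=0$ if $\mathrm{char}(k)=p>0$. Suppose $\delta(x)=1$ for some $x\in A$. Then $A$ is a self-projective left $A[z;\delta]$-module; equivalently, for every $\delta$-stable left ideal $I$ of $A$ and every $a\in A$ with $\delta(a)\in I$ there exists $y\in A^\delta$ with $a-y\in I$.
   Context: $A^\delta=\ker\delta$. $\delta$ locally nilpotent means every $a$ satisfies $\delta^n(a)=0$ for some $n>0$. $A[z;\delta]$ is the differential operator ring ($A[z]$ as left $A$-module, $za=az+\delta(a)$), acting on $A$ by $(\sum_i a_iz^i)\cdot x=\sum_ia_i\delta^i(x)$; its submodules of $A$ are the $\delta$-stable left ideals. A module $M$ is self-projective if for every submodule $N$, every homomorphism $M\to M/N$ lifts to an endomorphism of $M$. *)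

(* Defs.v *)
From HB Require Import structures.
From mathcomp Require Import all_boot all_order all_algebra.
Set Implicit Arguments. Unset Strict Implicit. Unset Printing Implicit Defensive.
Import GRing.Theory.
Local Open Scope ring_scope.

Section DiffOp.
Variable A : nzRingType.

(* An element of the differential operator ring A[z;d] is a finite sum
   \sum_i a_i z^i, represented by its coefficient sequence P = [:: a_0; a_1; ...]. *)
Definition dop_act (d : A -> A) (P : seq A) (x : A) : A :=
  \sum_(i < size P) P`_i * iter i d x.

Definition is_dsubmodule (d : A -> A) (N : A -> Prop) : Prop :=
  [/\ N 0, (forall x y, N x -> N y -> N (x + y)) &
      (forall P x, N x -> N (dop_act d P x))].

(* g : A -> A represents (through chosen representatives) a map A -> A/N;
   it is an A[z;d]-module homomorphism A -> A/N. *)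
Definition is_dhom_quot (d : A -> A) (N : A -> Prop) (g : A -> A) : Prop :=
  (forall x y, N (g (x + y) - (g x + g y))) /\
  (forall P x, N (g (dop_act d P x) - dop_act d P (g x))).

Definition is_dendo (d : A -> A) (h : A -> A) : Prop :=
  (forall x y, h (x + y) = h x + h y) /\
  (forall P x, h (dop_act d P x) = dop_act d P (h x)).

Definition dself_projective (d : A -> A) : Prop :=
  forall N : A -> Prop, is_dsubmodule d N ->
  forall g : A -> A, is_dhom_quot d N g ->
  exists h : A -> A, is_dendo d h /\ (forall x, N (h x - g x)).

Definition is_dstable_lideal (d : A -> A) (I : A -> Prop) : Prop :=
  [/\ I 0, (forall x y, I x -> I y -> I (x + y)),
      (forall r x, I x -> I (r * x)) & (forall x, I x -> I (d x))].
End DiffOp.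

(* Main.v *)
Require Import Defs.
From HB Require Import structures.
From mathcomp Require Import all_boot all_order all_algebra.
From Stdlib Require Import Classical.
Import GRing.Theory.
Local Open Scope ring_scope.

Fixpoint cf (k : fieldType) (j : nat) : k :=
  if j is j'.+1 then - cf k j' / (j'.+1)%:R else 1.

Lemma iter_mul_const (k : fieldType) (A : algType k) (d : {linear A -> A})
  (hder : forall a b : A, d (a * b) = d a * b + a * d b) (c : A) :
  d c = 0 -> forall i z, iter i d (z * c) = iter i d z * c.
Proof. by move=> dc; elim=> [|i IH] z //=; rewrite IH hder dc mulr0 addr0. Qed.

Lemma d_one (k : fieldType) (A : algType k) (d : {linear A -> A})
  (hder : forall a b : A, d (a * b) = d a * b + a * d b) : d 1 = 0.
Proof.
have h := hder 1 1; rewrite !mul1r mulr1 in h.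
by apply: (@addrI _ (d 1)); rewrite addr0 -h.
Qed.

Lemma d_xpow (k : fieldType) (A : algType k) (d : {linear A -> A})
  (hder : forall a b : A, d (a * b) = d a * b + a * d b) (x : A) (dx : d x = 1) i :
  d (x ^+ i.+1) = x ^+ i *+ i.+1.
Proof.
elim: i => [|i IH]; first by rewrite expr1 expr0 dx.
by rewrite exprS hder dx mul1r IH mulrnAr -exprS [RHS]mulrS.
Qed.

Arguments iter_mul_const {k A d}.
Arguments d_one {k A d}.
Arguments d_xpow {k A d}.

Lemma core (k : fieldType) (A : algType k) (d : {linear A -> A})
  (hder : forall a b : A, d (a * b) = d a * b + a * d b) (x : A) (dx : d x = 1)
  (I : A -> Prop) (hI : is_dstable_lideal d I) (a : A) (N : nat)
  (hN : iter N.+1 d a = 0) (hnz : forall j, (j < N)%N -> (j.+1)%:R != 0 :> k)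
  (hda : I (d a)) : exists y, d y = 0 /\ I (a - y).
Proof.
case: hI => I0 ID IM Id.
pose t i := cf k i *: (x ^+ i * iter i d a).
exists (\sum_(i < N.+1) t i); split.
- rewrite linear_sum.
  have E : forall i : 'I_N.+1, d (t i) = cf k i *: (d (x^+i) * iter i d a)
              + cf k i *: (x^+i * iter i.+1 d a).
    by move=> i; rewrite /t linearZ /= hder scalerDr.
  rewrite (eq_bigr _ (fun i _ => E i)) big_split /=.
  rewrite big_ord_recl [X in _ + X = _]big_ord_recr /= expr0 (d_one hder) mul0r scaler0 add0r.
  have hN' : d (iter N d a) = 0 := hN.
  rewrite hN' mulr0 scaler0 addr0 -big_split /=.
  apply: big1 => j _.
  rewrite add0n; change (bump 0 j) with j.+1; rewrite (d_xpow hder x dx) mulrnAl -scalerMnr scalerMnl -scalerDl.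
  rewrite /= -mulr_natr divfK ?addNr ?scale0r //.
  exact: hnz (ltn_ord j).
- have Hit : forall j, I (iter j.+1 d a).
    by elim=> [|j IH] //=; apply: (Id).
  rewrite big_ord_recl /t /= expr0 mul1r scale1r opprD addrA subrr add0r.
  rewrite -mulN1r.
  apply: (IM); apply: (big_ind I) => //.
  move=> j _; rewrite scalerAl; apply: (IM).
  rewrite add0n; exact: Hit.
Qed.

Lemma exN (k : fieldType) (A : algType k) (d : A -> A)
  (hchar0 : [pchar k] =i pred0 ->
            forall a : A, exists n : nat, (0 < n)%N /\ iter n d a = 0)
  (hcharp : forall p : nat, p \in [pchar k] -> forall a : A, iter p d a = 0)
  (a : A) :
  exists N, iter N.+1 d a = 0 /\ forall j, (j < N)%N -> (j.+1)%:R != 0 :> k.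
Proof.
case: (classic (exists p, p \in [pchar k])) => [[p hp]|hn].
- exists p.-1; have pp := pcharf_prime hp.
  rewrite prednK ?prime_gt0 //; split; first exact: hcharp.
  move=> j hj; rewrite -(dvdn_pcharf hp); apply/negP => /dvdn_leq => /(_ isT).
  by rewrite leqNgt -(ltn_predK (prime_gt1 pp)) ltnS hj.
- have h0 : [pchar k] =i pred0.
    by move=> n; rewrite inE; apply/negP => hn'; apply: hn; exists n.
  have [n [n0 hn0]] := hchar0 h0 a.
  exists n.-1; rewrite prednK //; split => // j _.
  by move/pcharf0P: h0 => ->.
Qed.

Arguments exN {k A d}.
Arguments core {k A d}.

Theorem proposition3p10 (k : fieldType) (A : algType k) (d : {linear A -> A})
  (hder : forall a b : A, d (a * b) = d a * b + a * d b)
  (hchar0 : [pchar k] =i pred0 ->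
            forall a : A, exists n : nat, (0 < n)%N /\ iter n d a = 0)
  (hcharp : forall p : nat, p \in [pchar k] -> forall a : A, iter p d a = 0)
  (hx : exists x : A, d x = 1) :
  dself_projective d /\
  (forall I : A -> Prop, is_dstable_lideal d I ->
     forall a : A, I (d a) -> exists y : A, d y = 0 /\ I (a - y)).
Proof.
have [x dx] := hx.
have P2 : forall I : A -> Prop, is_dstable_lideal d I ->
     forall a : A, I (d a) -> exists y : A, d y = 0 /\ I (a - y).
  move=> I hI a hda; have [N [hN hnz]] := exN hchar0 hcharp a.
  exact: core hder x dx I hI a N hN hnz hda.
split => //.
have dop1 : forall r z, dop_act d [:: r] z = r * z.
  by move=> r z; rewrite /dop_act /= big_ord_recl big_ord0 /= addr0.
have dopd : forall z, dop_act d [:: 0; 1] z = d z.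
  by move=> z; rewrite /dop_act /= !big_ord_recl big_ord0 /= mul0r add0r mul1r addr0.
move=> N [N0 ND NP] g [gD gP].
have NM : forall r z, N z -> N (r * z) by move=> r z /(NP [:: r]); rewrite dop1.
have Nd : forall z, N z -> N (d z) by move=> z /(NP [:: 0; 1]); rewrite dopd.
have NN : forall z, N z -> N (- z) by move=> z /(NM (-1)); rewrite mulN1r.
have hI : is_dstable_lideal d N by split.
have g0 : N (g 0).
  have := gD 0 0; rewrite addr0 opprD addrA subrr add0r => /NN; by rewrite opprK.
have dg1 : N (d (g 1)).
  have := gP [:: 0; 1] 1; rewrite !dopd (d_one hder) => /NN h.
  by have := ND _ _ g0 h; rewrite opprB addrC subrK.
have [y [dy Ny]] := P2 N hI (g 1) dg1.
exists (fun z => z * y); split.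
- split; first by move=> z w; rewrite mulrDl.
  move=> P z; rewrite /dop_act mulr_suml; apply: eq_bigr => i _.
  by rewrite (iter_mul_const hder y dy) mulrA.
- move=> z.
  have h1 := gP [:: z] 1; rewrite !dop1 mulr1 in h1.
  have h2 := NM z _ Ny; rewrite mulrBr in h2.
  have := NN _ (ND _ _ h1 h2); by rewrite addrA subrK opprB.
Qed.
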